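(* Consider the generative logic with $\mu\to1$ in the setting below. Let $\Delta$ be a finite multiset of time-indexed formulas such that $E'(\Delta)\neq\emptyset$. Then for every $k\in\{1,\dots,K\}$, $$p(D=d_k\mid\Delta)=\begin{cases}\frac{1}{|E'(\Delta)|}&\text{if }k\in E'(\Delta),\\ 0&\text{otherwise.}\end{cases}$$
   Context: Let $\mathcal{L}$ be a propositional language and let $K,T\ge1$. There are data sequences $d_1,\dots,d_K$; repetitions are allowed, and data are identified by their index $k$. Each $d_k$ is associated with a sequence of models $m(d_k)=(m(d_k)^1,\dots,m(d_k)^T)$ of $\mathcal{L}$. The prior is $p(D=d_k)=1/K$. A time-indexed formula is written $\alpha^t$, with $\alpha\in\mathcal{L}$ and $1\le t\le T$. Write $[\![\alpha^t]\!]_k=1$ if $\alpha$ is true in $m(d_k)^t$, and $0$ otherwise. For $\mu\in(0,1)$ and a finite multiset $X$ of time-indexed formulas, define $$p(X\mid d_k,\mu)=\prod_{\alpha^t\in X}\mu^{[\![\alpha^t]\!]_k}(1-\mu)^{1-[\![\alpha^t]\!]_k}.$$ Then define $$p(D=d_k\mid\Delta)=\lim_{\mu\to1}\frac{p(\Delta\mid d_k,\mu)\,p(d_k)}{\sum_j p(\Delta\mid d_j,\mu)\,p(d_j)}.$$ An index $k$ is an evidence of $X$ if $[\![\alpha^t]\!]_k=1$ for all $\alpha^t\in X$. Let $E(X)$ be the set of such indices. $X$ is called founded if $E(X)\neq\emptyset$. Let $MFS(\Delta)$ be the set of nonempty founded sub-multisets $S\subseteq\Delta$ that have maximum cardinality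 among all nonempty founded sub-multisets of $\Delta$. Set $E'(\Delta)=\bigcup_{S\in MFS(\Delta)}E(S)$. This union is empty if $MFS(\Delta)=\emptyset$. *)

(* Defs.v *)
From HB Require Import structures.
From mathcomp Require Import all_boot all_order all_algebra.
From mathcomp Require Import all_classical all_reals all_analysis.
Set Implicit Arguments. Unset Strict Implicit. Unset Printing Implicit Defensive.
Import Order.TTheory GRing.Theory Num.Theory.
Local Open Scope ring_scope.

Inductive form (A : Type) : Type :=
| Atom of A
| Bot
| Neg of form A
| And of form A & form A
| Or of form A & form A
| Imp of form A & form A.

Definition model (A : Type) := A -> bool.

Fixpoint sat (A : Type) (w : model A) (f : form A) : bool :=
  match f with
  | Atom a => w a
  | Bot => false
  | Neg g => ~~ sat w g
  | And g h => sat w g && sat w h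
  | Or g h => sat w g || sat w h
  | Imp g h => sat w g ==> sat w h
  end.

(* Time-indexed formula alpha^t with t : 'I_T (i.e. times 1..T as 0..T-1). *)
Definition tform (A : Type) (T : nat) := (form A * 'I_T)%type.

(* Data d_1..d_K as indices k : 'I_K; [m k t] is the model m(d_k)^t. *)

Definition den (A : Type) (K T : nat) (m : 'I_K -> 'I_T -> model A)
  (x : tform A T) (k : 'I_K) : nat := sat (m k x.2) x.1.

(* p(X | d_k, mu); finite multisets are represented by sequences. *)
Definition lik (R : realType) (A : Type) (K T : nat)
  (m : 'I_K -> 'I_T -> model A) (X : seq (tform A T)) (k : 'I_K) (mu : R) : R :=
  \prod_(x <- X) (mu ^+ den m x k * (1 - mu) ^+ (1 - den m x k)).

(* The expression inside the limit defining p(D = d_k | Delta), with prior 1/K. *)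
Definition post_mu (R : realType) (A : Type) (K T : nat)
  (m : 'I_K -> 'I_T -> model A) (Delta : seq (tform A T)) (k : 'I_K) (mu : R) : R :=
  lik m Delta k mu * (K%:R)^-1 / \sum_(j < K) lik m Delta j mu * (K%:R)^-1.

Definition evid (A : Type) (K T : nat) (m : 'I_K -> 'I_T -> model A)
  (X : seq (tform A T)) : {set 'I_K} :=
  [set k | all (fun x => sat (m k x.2) x.1) X].

Definition founded (A : Type) (K T : nat) (m : 'I_K -> 'I_T -> model A)
  (X : seq (tform A T)) : bool := evid m X != finset.set0.

(* Sub-multisets of Delta are the [mask b Delta] for b a bit-vector of
   length size Delta (selection of positions). *)
Definition subms (A : Type) (T : nat) (Delta : seq (tform A T))
  (b : (size Delta).-tuple bool) : seq (tform A T) := mask b Delta.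
Arguments subms {A T} Delta b.

Definition in_MFS (A : Type) (K T : nat) (m : 'I_K -> 'I_T -> model A)
  (Delta : seq (tform A T)) (b : (size Delta).-tuple bool) : bool :=
  [&& (0 < size (subms Delta b))%N, founded m (subms Delta b) &
      [forall b' : (size Delta).-tuple bool,
         (0 < size (subms Delta b'))%N && founded m (subms Delta b') ==>
         (size (subms Delta b') <= size (subms Delta b))%N]].

Arguments in_MFS {A K T} m Delta b.

Definition Eprime (A : Type) (K T : nat) (m : 'I_K -> 'I_T -> model A)
  (Delta : seq (tform A T)) : {set 'I_K} :=
  \bigcup_(b : (size Delta).-tuple bool | in_MFS m Delta b) evid m (subms Delta b).

(* Main.v *)
Require Import Defs.
From HB Require Import structures.
From mathcomp Require Import all_boot all_order all_algebra.
From mathcomp Require Import all_classical all_reals all_analysis.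
From mathcomp Require Import ring lra zify.
Import Order.TTheory GRing.Theory Num.Theory.
Import numFieldNormedType.Exports.
Local Open Scope ring_scope.
Local Open Scope classical_set_scope.

Lemma mask_all_size (X : Type) (q : pred X) (s : seq X) (b : bitseq) :
  all q (mask b s) -> (size (mask b s) <= count q s)%N.
Proof.
elim: s b => [|x s IH] [|c b] //=.
case: c => /=.
  by case/andP => -> /IH; rewrite add1n.
by move=> /IH H; apply: leq_trans H _; apply: leq_addl.
Qed.
Lemma Eprime_char (A : Type) (K T : nat) (hK : (0 < K)%N)
  (m : 'I_K -> 'I_T -> model A) (Delta : seq (tform A T))
  (hE : Eprime m Delta != finset.set0) :
  let a := fun j : 'I_K => count (fun x => sat (m j x.2) x.1) Delta in
  let M := (\max_(j : 'I_K) a j)%N in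
  (0 < M)%N /\ Eprime m Delta = finset (fun j => a j == M).
Proof.
move=> a M.
have evE X j : (j \in evid m X) = all (fun x => sat (m j x.2) x.1) X.
  by rewrite inE.
have leM j : (a j <= M)%N by apply: leq_bigmax.
pose bj j := map_tuple (fun x => sat (m j x.2) x.1) (in_tuple Delta).
have Sbj j : subms Delta (bj j) = seq.filter (fun x => sat (m j x.2) x.1) Delta.
  by rewrite /subms filter_mask.
have sizebj j : size (subms Delta (bj j)) = a j by rewrite Sbj size_filter.
have evbj j : j \in evid m (subms Delta (bj j)) by rewrite evE Sbj filter_all.
have [jm Mjm] : exists jm, M = a jm.
  have := @bigop.bigmax_eq_arg _ (Ordinal hK) xpredT a isT; rewrite -/M; by eexists; eauto.
have founded_le b j : j \in evid m (subms Delta b) -> (size (subms Delta b) <= M)%N.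
  move=> h; apply: leq_trans (leM j); apply: mask_all_size; by rewrite -evE.
have MFS_size b : in_MFS m Delta b -> size (subms Delta b) = M.
  case/and3P => s0 /set0Pn [j0 hj0] /forallP mx.
  apply/eqP; rewrite eqn_leq (founded_le _ _ hj0) /=.
  move: (mx (bj jm)); rewrite sizebj -Mjm => /implyP; apply; apply/andP; split.
    by apply: leq_trans s0 (founded_le _ _ hj0).
  by apply/set0Pn; exists jm; exact: evbj.
have Mpos : (0 < M)%N.
  case/set0Pn: hE => j /bigcupP [b hb _].
  by rewrite -(MFS_size b hb); case/and3P: hb.
split => //.
apply/setP => j; rewrite inE; apply/bigcupP/eqP.
  case=> b hb hj; apply/eqP; rewrite eqn_leq leM /= -(MFS_size b hb).
  by apply: mask_all_size; rewrite -evE.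
move=> ajM; exists (bj j) => //.
apply/and3P; split.
- by rewrite sizebj ajM.
- by apply/set0Pn; exists j.
- apply/forallP => b'; apply/implyP => /andP [_ /set0Pn [j' hj']].
  by rewrite sizebj ajM; apply: founded_le hj'.
Qed.

Lemma lik_eq (R : realType) (A : Type) (K T : nat)
  (m : 'I_K -> 'I_T -> model A) (X : seq (tform A T)) (j : 'I_K) (mu : R) :
  lik m X j mu = mu ^+ count (fun x => sat (m j x.2) x.1) X *
     (1 - mu) ^+ (size X - count (fun x => sat (m j x.2) x.1) X).
Proof.
rewrite /lik; elim: X => [|x X IH]; first by rewrite big_nil mulr1.
rewrite big_cons IH /den /=.
have hc := count_size (fun x => sat (m j x.2) x.1) X.
case: (sat (m j x.2) x.1) => /=.
  by rewrite subnn expr0 expr1 mulr1 mulrA -exprS add1n subSS.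
rewrite subn0 expr1 expr0 mul1r add0n subSn // exprS; ring.
Qed.

Lemma limit_part (R : realType) (K : nat) (hK : (0 < K)%N) (n M : nat)
  (a : 'I_K -> nat) (haM : forall j, (a j <= M)%N) (hMn : (M <= n)%N)
  (hex : exists j, a j = M) (k : 'I_K) (L : 'I_K -> R -> R)
  (hL : forall j mu, L j mu = mu ^+ a j * (1 - mu) ^+ (n - a j)) :
  (fun mu : R => L k mu * (K%:R)^-1 / \sum_(j < K) L j mu * (K%:R)^-1)
     @ at_left (1 : R) -->
    (if a k == M then (#|finset (fun j => a j == M)|%:R)^-1 else 0 : R^o).
Proof.
pose f j : {poly R} := 'X ^+ a j * (1 - 'X) ^+ (M - a j).
pose Q := \sum_(j < K) f j.
have fE j x : (f j).[x] = x ^+ a j * (1 - x) ^+ (M - a j).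
  by rewrite /f hornerM !horner_exp hornerD hornerN hornerX hornerC.
have QE x : Q.[x] = \sum_(j < K) (f j).[x] by rewrite /Q horner_sum.
have f1 j : (f j).[1] = (a j == M)%:R.
  rewrite fE expr1n mul1r subrr expr0n.
  by rewrite subn_eq0 eqn_leq haM.
have Q1 : Q.[1] = (#|finset (fun j => a j == M)|%:R).
  rewrite QE; under eq_bigr => j _ do rewrite f1.
  rewrite -natr_sum; congr (_%:R)%R.
  rewrite -sum1dep_card [RHS]big_mkcond /=; apply: eq_bigr => j _ /=.
  by case: (a j == M).
have Q1n0 : Q.[1] != 0.
  rewrite Q1 pnatr_eq0 -lt0n; apply/card_gt0P.
  by case: hex => j hj; exists j; rewrite inE hj.
have Hc : (fun mu => (f k).[mu] * (Q.[mu])^-1) @ nbhs (1 : R) -->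
            ((f k).[1] * (Q.[1])^-1 : R^o).
  apply: cvgM; first exact: continuous_horner.
  apply: cvgV => //; exact: continuous_horner.
have Hl := cvg_at_left_filter Hc.
have -> : (if a k == M then (#|finset (fun j => a j == M)|%:R)^-1 else 0 : R^o)
   = (f k).[1] * (Q.[1])^-1.
  by rewrite f1 Q1; case: (a k == M); rewrite ?mul1r ?mul0r.
apply: cvg_trans Hl; apply: near_eq_cvg.
near=> mu.
have hmu : 1 - mu != 0.
  rewrite subr_eq0 eq_sym; near: mu; exact: nbhs_left_neq.
have Lf j : L j mu = (1 - mu) ^+ (n - M) * (f j).[mu].
  rewrite hL fE mulrCA -exprD; congr (_ * _ ^+ _).
  have := haM j; lia.
rewrite QE /= Lf.
under [in RHS]eq_bigr => j _ do rewrite Lf.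
rewrite -mulr_suml -mulr_sumr.
have hx : (1 - mu) ^+ (n - M) * (K%:R)^-1 != 0 :> R.
  by rewrite mulf_neq0 // ?expf_neq0 // invr_eq0 pnatr_eq0 -lt0n.
have canc (x y z : R) : x != 0 -> (x * y) / (x * z) = y / z.
  by move=> h; rewrite invfM mulrACA divff // mul1r.
rewrite -[LHS](canc _ _ _ hx); congr (_ / _); ring.
Unshelve. all: end_near.
Qed.

Theorem theorem3 (R : realType) (A : Type) (K T : nat)
  (hK : (0 < K)%N) (hT : (0 < T)%N)
  (m : 'I_K -> 'I_T -> model A) (Delta : seq (tform A T))
  (hE : Eprime m Delta != finset.set0) (k : 'I_K) :
  (fun mu : R => post_mu m Delta k mu) @ at_left (1 : R) -->
    (if k \in Eprime m Delta then (#|Eprime m Delta|%:R)^-1 else 0 : R^o).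
Proof.
have [Mpos HE] := @Eprime_char A K T hK m Delta hE.
rewrite HE inE.
set a := fun j : 'I_K => count (fun x => sat (m j x.2) x.1) Delta.
set M := (\max_(j : 'I_K) a j)%N.
apply: (@limit_part R K hK (size Delta) M a _ _ _ k (fun j mu => lik m Delta j mu)).
- by move=> j; apply: leq_bigmax.
- by apply/bigop.bigmax_leqP => j _; apply: count_size.
- by have := @bigop.bigmax_eq_arg _ (Ordinal hK) xpredT a isT; eexists; eauto.
- by move=> j mu; rewrite lik_eq.
Qed.
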